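(* Let $q>0$, $q\neq1$, and $s\in(0,1)$ with $s^2>1/(1+\sqrt{q})$. For $\eta=(\eta_1,\eta_2)=(\cos\theta_\eta,\sin\theta_\eta)\in\mathbb{S}^1$, let $\mathcal{T}_1\theta_\eta$, $\mathcal{T}_2\theta_\eta$ be the two solutions $\theta_\xi$ (with $\xi=(\xi_1,\xi_2)=(\cos\theta_\xi,\sin\theta_\xi)$) of $$\sqrt{q}\,(\eta_1\xi_2-s^2\eta_2\xi_1)+(1-s^2)\xi_1\xi_2=0,$$ ordered so that $\operatorname{sgn}\cos\theta_\eta=\operatorname{sgn}\cos\mathcal{T}_1\theta_\eta=-\operatorname{sgn}\cos\mathcal{T}_2\theta_\eta$ and $\operatorname{sgn}\sin\theta_\eta=\operatorname{sgn}\sin\mathcal{T}_1\theta_\eta=-\operatorname{sgn}\sin\mathcal{T}_2\theta_\eta$. Then: (a) $\mathcal{T}_j(\theta_\eta+\pi)=\mathcal{T}_j\theta_\eta+\pi$ (mod $2\pi$) for $j=1,2$; (b) for $j=1,2$, with $\xi_1=\cos\mathcal{T}_j\theta_\eta$, $\xi_2=\sin\mathcal{T}_j\theta_\eta$, whenever $\eta_1\eta_2\neq0$, $$\frac{|\eta_1|}{|\xi_1|}-s^2\frac{|\eta_2|}{|\xi_2|}=(-1)^j\frac{1-s^2}{\sqrt{q}};$$ (c) $|\cos\mathcal{T}_2\theta_\eta|<|\cos\mathcal{T}_1\theta_\eta|$ whenever $\eta_1\eta_2\neq0$.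
   Context: Angles are taken modulo $2\pi$. It is a known fact (used as the setting here) that under the condition $s^2>1/(1+\sqrt{q})$ the displayed equation has, for each $\eta\in\mathbb{S}^1$, exactly two solutions $\theta_\xi\in\mathbb{R}/(2\pi\mathbb{Z})$, and they can be ordered as stated; moreover $|\cos\theta_\eta|\le|\cos\mathcal{T}_1\theta_\eta|$, and $|\cos\theta_\eta|\le|\cos\mathcal{T}_2\theta_\eta|\le|\cos\theta_\eta|/s^2$ if $q>1$, $|\cos\theta_\eta|\ge|\cos\mathcal{T}_2\theta_\eta|$ if $0<q<1$, and $\mathcal{T}_1\theta_\eta=\theta_\eta$ iff $\mathcal{T}_2\theta_\eta=\theta_\eta+\pi$ iff $\theta_\eta\in\{0,\pi/2,\pi,3\pi/2\}$. (This arises from stationary points for the ellipse $(x_1/a)^2+(x_2/b)^2<1$, $s=b/a$.) *)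

(* Defs.v *)
From Stdlib Require Import Reals.
Open Scope R_scope.

Definition sgn (x : R) : R :=
  if Rlt_dec 0 x then 1 else if Rlt_dec x 0 then -1 else 0.

Definition stat_eq (q s th x : R) : Prop :=
  sqrt q * (cos th * sin x - s ^ 2 * sin th * cos x)
  + (1 - s ^ 2) * cos x * sin x = 0.

(* Angles are taken modulo 2 pi: equality mod 2 pi is equality of the
   corresponding points (cos, sin) of the unit circle. *)
Definition ang_eq (a b : R) : Prop := cos a = cos b /\ sin a = sin b.

Definition is_T_pair (q s : R) (T1 T2 : R -> R) : Prop :=
  forall th : R,
    stat_eq q s th (T1 th) /\ stat_eq q s th (T2 th) /\
    (forall x, stat_eq q s th x -> ang_eq x (T1 th) \/ ang_eq x (T2 th)) /\
    sgn (cos th) = sgn (cos (T1 th)) /\ sgn (cos th) = - sgn (cos (T2 th)) /\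
    sgn (sin th) = sgn (sin (T1 th)) /\ sgn (sin th) = - sgn (sin (T2 th)).

(* Main.v *)
Require Import Defs.
From Stdlib Require Import Reals Lra Psatz.
Open Scope R_scope.

Lemma sgn_opp x : sgn (- x) = - sgn x.
Proof. unfold sgn; repeat destruct Rlt_dec; lra. Qed.

Lemma sgn_self_opp x : sgn x = - sgn x -> x = 0.
Proof. unfold sgn; repeat destruct Rlt_dec; lra. Qed.

Lemma sgn_nz c x : c <> 0 -> (sgn c = sgn x \/ sgn c = - sgn x) -> x <> 0.
Proof. unfold sgn; repeat destruct Rlt_dec; lra. Qed.

Lemma absdiv c x : c <> 0 -> sgn c = sgn x -> Rabs c / Rabs x = c / x.
Proof.
  unfold sgn; intros Hc; repeat destruct Rlt_dec; intros H; try lra.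
  - rewrite !Rabs_right by lra; reflexivity.
  - rewrite !Rabs_left by lra. field. lra.
Qed.

Lemma absdiv_neg c x : c <> 0 -> sgn c = - sgn x -> Rabs c / Rabs x = - (c / x).
Proof.
  unfold sgn; intros Hc; repeat destruct Rlt_dec; intros H; try lra.
  - rewrite Rabs_right by lra; rewrite Rabs_left by lra. field. lra.
  - rewrite Rabs_left by lra; rewrite Rabs_right by lra. field. lra.
Qed.

Lemma eqlemma k a s2 c d x1 x2 : 0 < k -> x1 <> 0 -> x2 <> 0 ->
  k * (c * x2 - s2 * d * x1) + a * x1 * x2 = 0 ->
  c / x1 - s2 * (d / x2) = - (a / k).
Proof.
  intros Hk H1 H2 E.
  assert (H : c / x1 - s2 * (d / x2) - (- (a / k)) =
     (k * (c * x2 - s2 * d * x1) + a * x1 * x2) / (k * x1 * x2)).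
  { field. repeat split; lra. }
  rewrite E in H. unfold Rdiv in H. rewrite Rmult_0_l in H. lra.
Qed.

Lemma vlem u1 u2 v1 v2 : 0 < u1 -> 0 < u2 -> 0 < v1 -> 0 < v2 ->
  u1 ^ 2 + v1 ^ 2 = 1 -> u2 ^ 2 + v2 ^ 2 = 1 -> u1 <= u2 -> v2 <= v1.
Proof. intros; nra. Qed.

Theorem corollary1 (q s : R) (T1 T2 : R -> R) :
  0 < q -> q <> 1 -> 0 < s -> s < 1 ->
  s ^ 2 > 1 / (1 + sqrt q) ->
  is_T_pair q s T1 T2 ->
  (* (a) *)
  (forall th, ang_eq (T1 (th + PI)) (T1 th + PI) /\
              ang_eq (T2 (th + PI)) (T2 th + PI)) /\
  (* (b) *)
  (forall th, cos th * sin th <> 0 ->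
     Rabs (cos th) / Rabs (cos (T1 th)) - s ^ 2 * (Rabs (sin th) / Rabs (sin (T1 th)))
       = - ((1 - s ^ 2) / sqrt q) /\
     Rabs (cos th) / Rabs (cos (T2 th)) - s ^ 2 * (Rabs (sin th) / Rabs (sin (T2 th)))
       = (1 - s ^ 2) / sqrt q) /\
  (* (c) *)
  (forall th, cos th * sin th <> 0 ->
     Rabs (cos (T2 th)) < Rabs (cos (T1 th))).
Proof.
  intros Hq Hq1 Hs0 Hs1 Hs2 HT.
  assert (Hk : 0 < sqrt q) by (apply sqrt_lt_R0; lra).
  assert (Ha : 0 < 1 - s ^ 2) by nra.
  assert (Hb : forall th, cos th * sin th <> 0 ->
     Rabs (cos th) / Rabs (cos (T1 th)) - s ^ 2 * (Rabs (sin th) / Rabs (sin (T1 th)))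
       = - ((1 - s ^ 2) / sqrt q) /\
     Rabs (cos th) / Rabs (cos (T2 th)) - s ^ 2 * (Rabs (sin th) / Rabs (sin (T2 th)))
       = (1 - s ^ 2) / sqrt q).
  { intros th Hcs.
    assert (Hc : cos th <> 0) by (intro E; apply Hcs; rewrite E; ring).
    assert (Hd : sin th <> 0) by (intro E; apply Hcs; rewrite E; ring).
    destruct (HT th) as (E1 & E2 & _ & S1 & S2 & S3 & S4).
    unfold stat_eq in E1, E2.
    assert (N1 : cos (T1 th) <> 0) by (apply (sgn_nz (cos th)); auto).
    assert (N2 : cos (T2 th) <> 0) by (apply (sgn_nz (cos th)); auto).
    assert (N3 : sin (T1 th) <> 0) by (apply (sgn_nz (sin th)); auto).
    assert (N4 : sin (T2 th) <> 0) by (apply (sgn_nz (sin th)); auto).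
    split.
    - rewrite !absdiv by auto.
      apply eqlemma; [exact Hk|exact N1|exact N3|rewrite <- E1; ring].
    - rewrite !absdiv_neg by auto.
      assert (G := eqlemma (sqrt q) (1 - s^2) (s^2) (cos th) (sin th)
                (cos (T2 th)) (sin (T2 th)) Hk N2 N4).
      assert (G' : cos th / cos (T2 th) - s ^ 2 * (sin th / sin (T2 th)) =
                   - ((1 - s ^ 2) / sqrt q)) by (apply G; rewrite <- E2; ring).
      lra. }
  split; [|split; [exact Hb|]].
  - intros th.
    destruct (HT th) as (E1 & E2 & _ & S1 & S2 & S3 & S4).
    destruct (HT (th + PI)) as (_ & _ & C & R1 & R2 & R3 & R4).
    rewrite neg_cos in R1, R2. rewrite neg_sin in R3, R4.
    rewrite !sgn_opp in R1, R2, R3, R4.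
    assert (Hn : ~ (cos th = 0 /\ sin th = 0)).
    { intros [A B]. pose proof (sin2_cos2 th). unfold Rsqr in *.
      rewrite A, B in *. lra. }
    split.
    + assert (St : stat_eq q s (th + PI) (T1 th + PI)).
      { unfold stat_eq in *. rewrite !neg_cos, !neg_sin. rewrite <- E1; ring. }
      destruct (C _ St) as [[A B]|[A B]].
      * split; symmetry; assumption.
      * exfalso; apply Hn. rewrite neg_cos in A. rewrite neg_sin in B.
        rewrite <- A, <- B in *. rewrite sgn_opp in R2, R4.
        split; apply sgn_self_opp; lra.
    + assert (St : stat_eq q s (th + PI) (T2 th + PI)).
      { unfold stat_eq in *. rewrite !neg_cos, !neg_sin. rewrite <- E2; ring. }
      destruct (C _ St) as [[A B]|[A B]].
      * exfalso; apply Hn. rewrite neg_cos in A. rewrite neg_sin in B.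
        rewrite <- A, <- B in *. rewrite sgn_opp in R1, R3.
        split; apply sgn_self_opp; lra.
      * split; symmetry; assumption.
  - intros th Hcs.
    destruct (Hb th Hcs) as [B1 B2].
    assert (Hc : cos th <> 0) by (intro E; apply Hcs; rewrite E; ring).
    assert (Hd : sin th <> 0) by (intro E; apply Hcs; rewrite E; ring).
    destruct (HT th) as (E1 & E2 & _ & S1 & S2 & S3 & S4).
    assert (N1 : cos (T1 th) <> 0) by (apply (sgn_nz (cos th)); auto).
    assert (N2 : cos (T2 th) <> 0) by (apply (sgn_nz (cos th)); auto).
    assert (N3 : sin (T1 th) <> 0) by (apply (sgn_nz (sin th)); auto).
    assert (N4 : sin (T2 th) <> 0) by (apply (sgn_nz (sin th)); auto).
    set (u1 := Rabs (cos (T1 th))) in *.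
    set (u2 := Rabs (cos (T2 th))) in *.
    set (v1 := Rabs (sin (T1 th))) in *.
    set (v2 := Rabs (sin (T2 th))) in *.
    assert (P1 : 0 < u1) by (apply Rabs_pos_lt; auto).
    assert (P2 : 0 < u2) by (apply Rabs_pos_lt; auto).
    assert (P3 : 0 < v1) by (apply Rabs_pos_lt; auto).
    assert (P4 : 0 < v2) by (apply Rabs_pos_lt; auto).
    assert (Q1 : u1 ^ 2 + v1 ^ 2 = 1).
    { unfold u1, v1; rewrite !pow2_abs. pose proof (sin2_cos2 (T1 th)).
      unfold Rsqr in *. lra. }
    assert (Q2 : u2 ^ 2 + v2 ^ 2 = 1).
    { unfold u2, v2; rewrite !pow2_abs. pose proof (sin2_cos2 (T2 th)).
      unfold Rsqr in *. lra. }
    destruct (Rlt_or_le u2 u1) as [L|L]; [exact L|exfalso].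
    assert (V : v2 <= v1) by (apply (vlem u1 u2); assumption).
    assert (D1 : Rabs (cos th) / u2 <= Rabs (cos th) / u1).
    { unfold Rdiv; apply Rmult_le_compat_l; [apply Rabs_pos|].
      apply Rinv_le_contravar; lra. }
    assert (D2 : Rabs (sin th) / v1 <= Rabs (sin th) / v2).
    { unfold Rdiv; apply Rmult_le_compat_l; [apply Rabs_pos|].
      apply Rinv_le_contravar; lra. }
    assert (Pa : 0 < (1 - s ^ 2) / sqrt q) by (apply Rdiv_lt_0_compat; lra).
    assert (s ^ 2 * (Rabs (sin th) / v1) <= s ^ 2 * (Rabs (sin th) / v2)).
    { apply Rmult_le_compat_l; [apply pow2_ge_0|exact D2]. }
    lra.
Qed.
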